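(* Let $\alpha\in(0,1)$, $a,b\in\mathbb{R}$, $\tau>0$, and $Q(s)=s^\alpha-a-b e^{-s\tau}$ with the principal branch of $s^\alpha$ (and $0^\alpha=0$). If $a\le b<-a$, then $Q(s)=0$ has no root $s$ with $\operatorname{Re}s\ge 0$.
   Context: $s^\alpha=|s|^\alpha e^{i\alpha\arg s}$ with $\arg s\in(-\pi,\pi]$ restricted to $\operatorname{Re}s\ge0$, i.e. $\arg s\in[-\pi/2,\pi/2]$. *)

(* Defs.v *)
From Stdlib Require Import Reals.
Open Scope R_scope.

Record Cx : Type := mkCx { Re : R ; Im : R }.

Definition Cadd (z w : Cx) : Cx := mkCx (Re z + Re w) (Im z + Im w).
Definition Csub (z w : Cx) : Cx := mkCx (Re z - Re w) (Im z - Im w).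
Definition Cmul (z w : Cx) : Cx :=
  mkCx (Re z * Re w - Im z * Im w) (Re z * Im w + Im z * Re w).
Definition RtoC (x : R) : Cx := mkCx x 0.
Definition C0 : Cx := mkCx 0 0.

Definition Cmod (z : Cx) : R := sqrt (Re z ^ 2 + Im z ^ 2).

(* principal argument, with values in (-PI, PI]; Carg 0 = 0 *)
Definition Carg (z : Cx) : R :=
  let x := Re z in let y := Im z in
  if Rlt_dec 0 x then atan (y / x)
  else if Rlt_dec x 0 then
    (if Rle_dec 0 y then atan (y / x) + PI else atan (y / x) - PI)
  else
    if Rlt_dec 0 y then PI / 2
    else if Rlt_dec y 0 then - (PI / 2) else 0.

Definition Cexp (z : Cx) : Cx :=
  mkCx (exp (Re z) * cos (Im z)) (exp (Re z) * sin (Im z)).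

Definition Cpow (z : Cx) (alpha : R) : Cx :=
  if Rlt_dec 0 (Cmod z) then
    mkCx (Rpower (Cmod z) alpha * cos (alpha * Carg z))
         (Rpower (Cmod z) alpha * sin (alpha * Carg z))
  else C0.

Definition Qchar (alpha a b tau : R) (s : Cx) : Cx :=
  Csub (Csub (Cpow s alpha) (RtoC a))
       (Cmul (RtoC b) (Cexp (Cmul (RtoC (- tau)) s))).

(* Main.v *)
Require Import Defs.
From Stdlib Require Import Reals Lra Psatz.
Open Scope R_scope.

Lemma carg_bound (s : Cx) : 0 <= Re s -> -(PI/2) <= Carg s <= PI/2.
Proof.
  intro H. unfold Carg.
  pose proof (atan_bound (Im s / Re s)). pose proof PI_RGT_0.
  destruct (Rlt_dec 0 (Re s)); [lra|].
  destruct (Rlt_dec (Re s) 0); [lra|].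
  destruct (Rlt_dec 0 (Im s)); [lra|].
  destruct (Rlt_dec (Im s) 0); lra.
Qed.

Theorem lemma3p2 (alpha a b tau : R) :
  0 < alpha < 1 -> 0 < tau -> a <= b -> b < - a ->
  forall s : Cx, 0 <= Re s -> Qchar alpha a b tau s <> C0.
Proof.
  intros Ha Ht Hab Hb s Hs HQ.
  assert (HR : Re (Qchar alpha a b tau s) = 0) by (rewrite HQ; reflexivity).
  unfold Qchar, Csub, Cmul, Cexp, RtoC in HR; simpl in HR.
  set (e := exp (- tau * Re s - 0 * Im s)) in HR.
  set (c := cos (- tau * Im s + 0 * Re s)) in HR.
  assert (He0 : 0 < e) by apply exp_pos.
  assert (He1 : e <= 1).
  { unfold e. rewrite <- exp_0. destruct (Req_dec (- tau * Re s - 0 * Im s) 0) as [E|E].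
    - rewrite E; lra.
    - left. apply exp_increasing. nra. }
  assert (Hc : -1 <= c <= 1) by (unfold c; split; [apply COS_bound|apply COS_bound]).
  assert (Hbec : b * (e * c) <= - a).
  { destruct (Rle_dec 0 b).
    - assert (e*c <= 1) by nra. nra.
    - assert (-1 <= e*c) by nra. nra. }
  unfold Cpow in HR.
  destruct (Rlt_dec 0 (Cmod s)) as [Hm|Hm]; simpl in HR.
  - pose proof (carg_bound s Hs). pose proof PI_RGT_0.
    assert (0 < cos (alpha * Carg s)) by (apply cos_gt_0; nra).
    assert (0 < Rpower (Cmod s) alpha) by (unfold Rpower; apply exp_pos).
    assert (0 < Rpower (Cmod s) alpha * cos (alpha * Carg s)) by nra.
    lra.
  - assert (Hs0 : Re s = 0 /\ Im s = 0).
    { unfold Cmod in Hm. assert (Hsq : sqrt (Re s ^ 2 + Im s ^ 2) = 0).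
      { pose proof (sqrt_pos (Re s ^ 2 + Im s ^ 2)). lra. }
      apply sqrt_eq_0 in Hsq; [|nra]. split; nra. }
    destruct Hs0 as [H1 H2].
    unfold e, c in HR. rewrite H1, H2 in HR.
    replace (- tau * 0 - 0 * 0) with 0 in HR by ring.
    replace (- tau * 0 + 0 * 0) with 0 in HR by ring.
    rewrite exp_0, cos_0 in HR. lra.
Qed.
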